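(* A (Tychonoff) space $X$ is a finite $C$-space if and only if for any sequence $\{Q_n\}$ of finite-dimensional cubes and closed nowhere dense sets $A_n\subset Q_n$, every sequence of continuous maps $f_n\colon X\to Q_n$ is finitely removable from $A=\prod_{n=1}^\infty A_n$, i.e. for every sequence of positive reals $\{\epsilon_n\}$ there exist $m$ and continuous maps $g_n\colon X\to Q_n$, $n=1,\dots,m$, with $d_n(f_n(x),g_n(x))\le\epsilon_n$ for all $x\in X$, $n\le m$, and $(g_1(x),\dots,g_m(x))\notin\prod_{n=1}^m A_n$ for all $x\in X$.
   Context: A set is functionally open if it is a cozero set. $X$ is a finite $C$-space if for every sequence $\{\omega_n\}$ of finite covers of $X$ by functionally open sets there exist $k$ and finite families $\gamma_1,\dots,\gamma_k$ of pairwise disjoint functionally open sets such that each $\gamma_n$ refines $\omega_n$ and $\bigcup_{n=1}^k\gamma_n$ covers $X$. A finite-dimensional cube is $Q_n=[a_n,b_n]^{k(n)}\subset\mathbb R^{k(n)}$, with $d_n$ the metric induced by a norm on $\mathbb R^{k(n)}$. *)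

(* Defs.v *)
From mathcomp Require Import all_boot all_order all_algebra all_classical all_reals all_analysis.
Import Order.TTheory GRing.Theory Num.Theory.
Import numFieldNormedType.Exports.
Set Implicit Arguments. Unset Strict Implicit. Unset Printing Implicit Defensive.
Local Open Scope classical_set_scope.
Local Open Scope ring_scope.

Definition tychonoff_space (R : realType) (X : topologicalType) : Prop :=
  hausdorff_space X /\
  forall (x : X) (B : set X), closed B -> ~ B x ->
    exists f : X -> R, continuous f /\ f x = 0 /\ (forall y, B y -> f y = 1).

Definition functionally_open (R : realType) (X : topologicalType) (U : set X) : Prop :=
  exists f : X -> R, continuous f /\ U = [set x | f x != 0].

Definition fo_finite_cover (R : realType) (X : topologicalType) (w : seq (set X)) : Prop :=
  (forall U, U \in w -> functionally_open R U) /\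
  (forall x : X, exists2 U, U \in w & U x).

Definition fo_disjoint_family (R : realType) (X : topologicalType) (g : seq (set X)) : Prop :=
  (forall U, U \in g -> functionally_open R U) /\
  (forall i j, (i < size g)%N -> (j < size g)%N -> i <> j ->
     nth set0 g i `&` nth set0 g j = set0).

Definition refines (X : Type) (g w : seq (set X)) : Prop :=
  forall U, U \in g -> exists2 V, V \in w & U `<=` V.

(* finite C-space (sequences indexed from 0) *)
Definition finite_C_space (R : realType) (X : topologicalType) : Prop :=
  forall omega : nat -> seq (set X),
    (forall n, fo_finite_cover R (omega n)) ->
    exists (k : nat) (gamma : nat -> seq (set X)),
      (forall n, (n < k)%N ->
         fo_disjoint_family R (gamma n) /\ refines (gamma n) (omega n)) /\
      (forall x : X, exists n, (n < k)%N /\ exists2 U, U \in gamma n & U x).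

Definition is_norm (R : realType) (k : nat) (N : 'rV[R]_k -> R) : Prop :=
  [/\ forall v, 0 <= N v,
      forall v, N v = 0 -> v = 0,
      forall (c : R) v, N (c *: v) = `|c| * N v
    & forall v w, N (v + w) <= N v + N w].

Definition cube (R : realType) (k : nat) (a b : R) : set 'rV[R]_k :=
  [set v | forall i : 'I_k, a <= v ord0 i <= b].

Definition closed_nowhere_dense_in (T : topologicalType) (Q A : set T) : Prop :=
  [/\ A `<=` Q, closed A &
      forall U : set T, open U -> U `&` Q `<=` A -> U `&` Q = set0].
Arguments cube {R} k a b.

(* Main.v *)
Require Import Defs.
From mathcomp Require Import all_boot all_order all_algebra all_classical all_reals all_analysis.
From mathcomp Require Import ring lra.
Import Order.TTheory GRing.Theory Num.Theory.
Import numFieldNormedType.Exports.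
Local Open Scope classical_set_scope.
Local Open Scope ring_scope.

Module Helpers.
Set Implicit Arguments. Unset Strict Implicit. Unset Printing Implicit Defensive.

Section H.
Variable R : realType.

Lemma coord_le_norm k (v : 'rV[R]_k) i : `|v ord0 i| <= `|v|.
Proof.
have /mapP[j Hj ->] : `|v ord0 i| \in [seq `|v x.1 x.2| | x : 'I_1 * 'I_k].
  by apply/mapP; exists (ord0, i) => //=; rewrite mem_enum.
by rewrite [leRHS]/Num.norm /= mx_normrE; apply/bigmax_geP; right => /=; exists j.
Qed.

Lemma row_sum_delta k (v : 'rV[R]_k) : v = \sum_(i < k) v ord0 i *: delta_mx ord0 i.
Proof. by rewrite {1}(matrix_sum_delta v) big_ord1. Qed.

Lemma sum_cont (T : topologicalType) (V : normedModType R) (I : Type) (r : seq I) (P : pred I)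
  (F : I -> T -> V) : (forall i, continuous (F i)) ->
  continuous (fun x => \sum_(i <- r | P i) F i x).
Proof. move=> H; apply: continuous_big => //; exact: add_continuous. Qed.

Lemma row_cont (T : topologicalType) k (h : 'I_k -> T -> R) :
  (forall i, continuous (h i)) -> continuous (fun x => \row_i h i x : 'rV[R]_k).
Proof.
move=> H.
have -> : (fun x => \row_i h i x : 'rV[R]_k) =
   (fun x => \sum_(i < k) h i x *: (delta_mx ord0 i : 'rV[R]_k)).
  apply: funext => x; rewrite [LHS]row_sum_delta; apply: eq_bigr => i _; by rewrite mxE.
apply: sum_cont => i x; apply: continuousZ; [exact: H| exact: cvg_cst].
Qed.

End H.


Section H.
Variable R : realType.
Variables (k : nat) (N : 'rV[R]_k -> R) (hN : is_norm N).

Lemma N0 : N 0 = 0.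
Proof. case: hN => _ _ hZ _; by rewrite -(scale0r (0:'rV[R]_k)) hZ normr0 mul0r. Qed.

Lemma NN v : N (- v) = N v.
Proof. case: hN => _ _ hZ _; by rewrite -scaleN1r hZ normrN normr1 mul1r. Qed.

Lemma NB v w : N (v - w) = N (w - v).
Proof. by rewrite -NN opprB. Qed.

Lemma Nge0 v : 0 <= N v. Proof. by case: hN. Qed.

Lemma NT v w : N (v + w) <= N v + N w. Proof. by case: hN. Qed.

Lemma NZ c v : N (c *: v) = `|c| * N v. Proof. by case: hN. Qed.

Lemma Nsum (I : Type) (r : seq I) (F : I -> 'rV[R]_k) :
  N (\sum_(i <- r) F i) <= \sum_(i <- r) N (F i).
Proof.
elim: r => [|i r IH]; first by rewrite !big_nil N0.
rewrite !big_cons; apply: le_trans (NT _ _) _; exact: lerD.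
Qed.

Definition NC := \sum_(i < k) N (delta_mx ord0 i).

Lemma NCge0 : 0 <= NC. Proof. by apply: sumr_ge0 => i _; exact: Nge0. Qed.

Lemma Nbound v : N v <= NC * `|v|.
Proof.
rewrite [X in N X]row_sum_delta; apply: le_trans (Nsum _ _) _.
rewrite /NC mulr_suml; apply: ler_sum => i _; rewrite NZ mulrC.
by apply: ler_wpM2l; [exact: Nge0 | exact: coord_le_norm].
Qed.

Lemma Ndiff v w : `|N v - N w| <= N (v - w).
Proof.
rewrite ler_norml; apply/andP; split.
  rewrite lerBrDl -lerBrDr opprK NB.
  by have := NT (w - v) v; rewrite subrK addrC.
rewrite lerBlDr; by have := NT (v - w) w; rewrite subrK.
Qed.

Lemma N_cont : continuous N.
Proof.
move=> v; apply: (@cvgrPdist_lt _ _ _ (nbhs v) (nbhs_filter v) N (N v)).2 => e e0.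
have e1 : 0 < e / (NC + 1) by apply: divr_gt0 => //; apply: ltr_wpDl; [exact: NCge0|].
apply/(nbhs_normP v (fun w => `|N v - N w| < e)); exists (e / (NC + 1)) => // w /= hw.
apply: le_lt_trans (Ndiff _ _) _; apply: le_lt_trans (Nbound _) _.
apply: (@le_lt_trans _ _ ((NC + 1) * `|v - w|)).
  by apply: ler_wpM2r => //; rewrite lerDl.
by rewrite mulrC -ltr_pdivlMr // ltr_wpDl //; exact: NCge0.
Qed.

End H.


Section H.
Variable R : realType.

Lemma cube_compact k (a b : R) : compact (cube k a b).
Proof.
have -> : cube k a b = [set v : 'rV[R]_k | forall i, `[a, b]%classic (v ord0 i)].
  by apply/seteqP; split => v /= h i; have := h i; rewrite /= in_itv.
by apply: (@rV_compact R k (fun=> `[a, b]%classic)) => i; exact: segment_compact.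
Qed.

Lemma cube_closed k (a b : R) : closed (cube k a b).
Proof. apply: compact_closed; [exact: norm_hausdorff | exact: cube_compact]. Qed.

Lemma conv_le (a b u w l : R) : a <= u <= b -> a <= w <= b -> 0 <= l <= 1 ->
  a <= u + l * (w - u) <= b.
Proof. move=> /andP[h1 h2] /andP[h3 h4] /andP[h5 h6]; apply/andP; split; nra. Qed.

Lemma cube_conv k (a b : R) v w l : cube k a b v -> cube k a b w -> 0 <= l <= 1 ->
  cube k a b (v + l *: (w - v)).
Proof. move=> hv hw hl i; rewrite !mxE; exact: conv_le. Qed.

Lemma min_cont : continuous (fun p : R * R => Num.min p.1 p.2).
Proof. move=> p; apply: (@continuous_min R _ fst snd p); [exact: cvg_fst | exact: cvg_snd]. Qed.

Definition gap m (i : 'I_m) (y : 'rV[R]_m) : R :=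
  \big[Num.min/1]_(j | j != i) (y ord0 i - y ord0 j).

Lemma gap_pos m (i : 'I_m) y : 0 < gap i y <-> forall j, j != i -> y ord0 j < y ord0 i.
Proof.
split.
  by move=> /bigmin_gtP [_ h] j /h; rewrite subr_gt0.
move=> h; apply/bigmin_gtP; split => // j /h; by rewrite subr_gt0.
Qed.

Lemma gap_cont m (i : 'I_m) : continuous (gap i).
Proof.
apply: (@continuous_big _ _ _ _ _ min_cont) => j _ y.
by apply: continuousB; apply: coord_continuous.
Qed.

Lemma coz_pos (T : Type) (h : T -> R) :
  [set x | 0 < h x] = [set x | Num.max 0 (h x) != 0].
Proof.
apply/seteqP; split => x /=.
  by move=> hx; rewrite max_r ?(ltW hx) // gt_eqF.
by case: (ltP 0 (h x)) => // hle; rewrite eqxx.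
Qed.

Lemma max0_cont (T : topologicalType) (h : T -> R) : continuous h ->
  continuous (fun x => Num.max 0 (h x)).
Proof. move=> hc x; apply: (@continuous_max R _ (fun=> 0) h x); [exact: cvg_cst | exact: hc]. Qed.

End H.


Section H.
Variable R : realType.

Definition Abad m : set 'rV[R]_m :=
  [set y | cube m 0 1 y /\ ~ (exists i, forall j, j != i -> y ord0 j < y ord0 i)].
Arguments Abad : clear implicits.

Lemma Abad_cnd m : closed_nowhere_dense_in (cube m.+1 0 1) (Abad m.+1).
Proof.
split.
- by move=> y [].
- have -> : Abad m.+1 = cube m.+1 0 1 `&` ~` (\bigcup_(i in setT) [set y | 0 < gap i y]).
    apply/seteqP; split => y /=.
      move=> [hc hn]; split => //; move=> [i _ /gap_pos h]; apply: hn; by exists i.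
    move=> [hc hn]; split => // -[i hi]; apply: hn; exists i => //; exact/gap_pos.
  apply: closedI; first exact: cube_closed.
  apply: open_closedC; apply: bigcup_open => i _.
  have -> : [set y | 0 < gap i y] = gap i @^-1` [set t | 0 < t] by [].
  apply: open_comp; [move=> y _; exact: gap_cont | exact: open_gt].
- move=> U oU hsub; apply/seteqP; split => // y [Uy Qy]; exfalso.
  pose i0 := [arg max_(i > ord0) y ord0 i]%O.
  have hmax : forall j, y ord0 j <= y ord0 i0.
    rewrite /i0; case: arg_maxP => // i _ hi j; exact: hi.
  pose e : 'rV[R]_m.+1 := delta_mx ord0 i0.
  have ce : cube m.+1 0 1 e.
    move=> j; rewrite mxE eqxx /=; case: (j == i0) => /=; by rewrite ?lexx ?ler01.
  have : nbhs y U by move: oU; rewrite openE => /(_ y Uy).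
  move=> /nbhs_normP [r /= r0 hr].
  pose d := `|y - e| + 1.
  have d0 : 0 < d by rewrite /d ltr_wpDl.
  pose t := r / (r + d).
  have t0 : 0 < t by rewrite /t divr_gt0 // addr_gt0.
  have t1 : t < 1.
    rewrite /t ltr_pdivrMr; last exact: addr_gt0.
    have -> : forall z : R, 1 * z = z by move=> z; rewrite mul1r.
    by rewrite ltrDl.
  pose y' := y + t *: (e - y).
  have Qy' : cube m.+1 0 1 y' by apply: cube_conv => //; rewrite (ltW t0) (ltW t1).
  have Uy' : U y'.
    apply: hr => /=; rewrite /y' opprD addrA subrr add0r normrN normrZ gtr0_norm //.
    rewrite distrC; apply: (@le_lt_trans _ _ (t * d)).
      by apply: ler_wpM2l; [exact: ltW | rewrite /d lerDl].
    rewrite /t mulrAC ltr_pdivrMr; last exact: addr_gt0.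
    by rewrite ltr_pM2l // ltrDr.
  have [_ hn] := hsub y' (conj Uy' Qy').
  apply: hn; exists i0 => j hj.
  rewrite /y' !mxE !eqxx /= (negbTE hj) /=.
  have := hmax j; nra.
Qed.

End H.


Section H.
Variable R : realType.

Lemma le_sum_term m (F : 'I_m -> R) i : (forall j, 0 <= F j) -> F i <= \sum_j F j.
Proof.
move=> h; rewrite (bigD1 i) //= lerDl; apply: sumr_ge0 => j _; exact: h.
Qed.

Lemma pigeon m (F : 'I_m -> R) : (0 < m)%N -> \sum_i F i = 1 ->
  exists j, (2 * m%:R)^-1 <= F j.
Proof.
move=> m0 hs; apply: contrapT => hne.
have hlt : forall j, F j <= (2 * m%:R)^-1.
  move=> j; rewrite leNgt; apply/negP => h; apply: hne; exists j; exact: ltW.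
have : \sum_(i < m) F i <= \sum_(i < m) (2 * m%:R)^-1 by apply: ler_sum => j _.
rewrite hs sumr_const card_ord.
have -> : (2 * m%:R)^-1 *+ m = 2^-1 :> R.
  rewrite -mulr_natr; field; by rewrite pnatr_eq0 -lt0n m0.
lra.
Qed.

Lemma keyineq (fi fj gi gj e : R) : 0 < e -> `|fi - gi| <= e -> `|fj - gj| <= e ->
  4 * e <= fj -> gj <= gi -> 0 < fi.
Proof. move=> e0 /ler_normlP [h1 h2] /ler_normlP [h3 h4] h5 h6; lra. Qed.

End H.

Unset Implicit Arguments.

Lemma dirB (R : realType) (X : topologicalType) :
  (forall (k : nat -> nat) (a b : nat -> R) (N : forall n, 'rV[R]_(k n) -> R)
          (A : forall n, set 'rV[R]_(k n)) (f : forall n, X -> 'rV[R]_(k n)),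
     (forall n, a n < b n) ->
     (forall n, is_norm (N n)) ->
     (forall n, closed_nowhere_dense_in (cube (k n) (a n) (b n)) (A n)) ->
     (forall n, continuous (f n) /\ forall x, cube (k n) (a n) (b n) (f n x)) ->
     forall eps : nat -> R, (forall n, 0 < eps n) ->
       exists (m : nat) (g : forall n, X -> 'rV[R]_(k n)),
         (forall n, (n < m)%N ->
            [/\ continuous (g n),
                forall x, cube (k n) (a n) (b n) (g n x)
              & forall x, N n (f n x - g n x) <= eps n]) /\
         (forall x, exists n, (n < m)%N /\ ~ A n (g n x))) ->
  finite_C_space R X.
Proof.
move=> H omega hcov.
have [[x0 _]|X0] := pselect (exists x : X, True); last first.
  exists 0%N, (fun=> [::]); split => // x; exfalso; apply: X0; by exists x.
pose K n := size (omega n).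
have Kpos n : (0 < K n)%N.
  have [U Uin _] := (hcov n).2 x0; rewrite /K; by case: (omega n) Uin.
have /choice [phi hphi] : forall p : nat * nat, exists phi : X -> R,
    continuous phi /\ nth set0 (omega p.1) p.2 = [set x | phi x != 0].
  move=> [n i] /=; case: (ltnP i (size (omega n))) => hi.
    exact: (hcov n).1 _ (mem_nth _ hi).
  exists (fun=> 0); split; first by move=> x; exact: cvg_cst.
  rewrite nth_default //; apply/seteqP; split => x //=; by rewrite eqxx.
pose ph n (i : nat) x := `|phi (n, i) x|.
pose s n x := \sum_(i < K n) ph n i x.
have ph_ge0 n i x : 0 <= ph n i x by exact: normr_ge0.
have ph_cont n i : continuous (ph n i).
  move=> x; apply: (@continuous_comp _ _ _ (phi (n, i)) Num.norm x);
    [exact: (hphi _).1 | exact: norm_continuous].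
have s_cont n : continuous (s n) by apply: sum_cont => i; exact: ph_cont.
have s_pos n x : 0 < s n x.
  have [U Uin Ux] := (hcov n).2 x.
  have hi : (index U (omega n) < K n)%N by rewrite /K index_mem.
  have hne : phi (n, index U (omega n)) x != 0.
    by move: (hphi (n, index U (omega n))).2; rewrite /= nth_index // => e; rewrite e in Ux.
  apply: (@lt_le_trans _ _ (ph n (Ordinal hi) x)); first by rewrite /ph normr_gt0.
  exact: (@le_sum_term R _ (fun i : 'I_(K n) => ph n i x) (Ordinal hi)).
pose f n x : 'rV[R]_(K n) := \row_(i < K n) (ph n i x / s n x).
pose eps n : R := (8 * (K n)%:R)^-1.
have epsE n : (2 * (K n)%:R)^-1 = 4 * eps n.
  rewrite /eps; field; by rewrite pnatr_eq0 -lt0n Kpos.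
have eps_pos n : 0 < eps n by rewrite /eps invr_gt0 mulr_gt0 // ltr0n Kpos.
have o1 : forall n : nat, (0 : R) < 1 by move=> n; exact: ltr01.
have o2 : forall n, is_norm (@Num.norm _ 'rV[R]_(K n)).
  move=> n; split; [exact: normr_ge0 | move=> v; exact: normr0_eq0 | exact: normrZ | exact: ler_normD].
have o3 : forall n, closed_nowhere_dense_in (cube (K n) 0 1) (@Abad R (K n)).
  move=> n; move: (Kpos n); case: (K n) => // m _; exact: Abad_cnd.
have o4 : forall n, continuous (f n) /\ forall x, cube (K n) 0 1 (f n x).
  move=> n; split.
    apply: row_cont => i x; apply: continuousM; first exact: ph_cont.
    apply: continuousV; [by rewrite gt_eqF | exact: s_cont].
  move=> x i; rewrite mxE; apply/andP; split.
    by apply: divr_ge0 => //; exact: ltW.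
  rewrite ler_pdivrMr // mul1r.
  exact: (@le_sum_term R _ (fun i : 'I_(K n) => ph n i x) i).
have [m [g [hg hcovg]]] := H K (fun=> 0) (fun=> 1) (fun n => @Num.norm _ 'rV[R]_(K n))
  (fun n => @Abad R (K n)) f o1 o2 o3 o4 eps eps_pos.
pose W n (i : 'I_(K n)) := [set x | forall j, j != i -> g n x ord0 j < g n x ord0 i].
exists m, (fun n => [seq W n i | i <- enum 'I_(K n)]); split; last first.
  move=> x; have [n [hn hA]] := hcovg x; exists n; split => //.
  have [_ hc _] := hg n hn.
  have [i hi] : exists i, forall j, j != i -> g n x ord0 j < g n x ord0 i.
    by apply: contrapT => h; apply: hA; split.
  exists (W n i) => //; apply: map_f; exact: mem_enum.
move=> n hn; have [gc gcube gnorm] := hg n hn; split.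
  split.
    move=> U /mapP [i _ ->]; exists (fun x => Num.max 0 (gap i (g n x))); split.
      apply: max0_cont => x; apply: (@continuous_comp _ _ _ (g n) (gap i) x);
        [exact: gc | exact: gap_cont].
    rewrite -coz_pos; apply/seteqP; split => x /=; by move/gap_pos.
  move=> i j; rewrite size_map size_enum_ord => hi hj hij.
  rewrite (nth_map (Ordinal hi)) ?size_enum_ord // (nth_map (Ordinal hj)) ?size_enum_ord //.
  set oi := nth _ _ i; set oj := nth _ _ j.
  have voi : nat_of_ord oi = i by rewrite /oi nth_enum_ord.
  have voj : nat_of_ord oj = j by rewrite /oj nth_enum_ord.
  apply/seteqP; split => x // [hx1 hx2].
  have hne : oj != oi by apply/eqP => e; apply: hij; rewrite -voi -voj e.
  have := hx1 oj hne; have := hx2 oi; rewrite eq_sym hne => /(_ isT) h1 h2.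
  by have := lt_trans h1 h2; rewrite ltxx.
move=> U /mapP [i _ ->]; exists (nth set0 (omega n) i); first exact: mem_nth.
move=> x hx; rewrite (hphi (n, val i)).2 /=.
have hsum : \sum_(j < K n) f n x ord0 j = 1.
  under eq_bigr do rewrite mxE.
  by rewrite -mulr_suml -/(s n x) divff // gt_eqF ?s_pos.
have [j hj] := pigeon (Kpos n) hsum.
have hgij : g n x ord0 j <= g n x ord0 i.
  case: (eqVneq j i) => [->//|hji]; apply: ltW; exact: hx.
have coord l : `|f n x ord0 l - g n x ord0 l| <= eps n.
  apply: le_trans (gnorm x); have -> : f n x ord0 l - g n x ord0 l = (f n x - g n x) ord0 l by rewrite !mxE.
  exact: coord_le_norm.
rewrite epsE in hj.
have fpos : 0 < f n x ord0 i := keyineq (eps_pos n) (coord i) (coord j) hj hgij.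
apply/negP => /eqP h0; move: fpos; by rewrite /f mxE /ph h0 normr0 mul0r ltxx.
Qed.


Lemma dchoice (I : Type) (T : I -> Type) (P : forall i, T i -> Prop) :
  (forall i, exists y, P i y) -> exists f : forall i, T i, forall i, P i (f i).
Proof. move=> h; exists (fun i => proj1_sig (cid (h i))) => i; exact: proj2_sig (cid (h i)). Qed.

Lemma fin_ineq (R : realType) (s t : R) : 0 < s -> (t + 1) * s <= s * t -> False.
Proof. move=> h1 h2; nra. Qed.

Lemma dirA (R : realType) (X : topologicalType) :
  finite_C_space R X ->
  (forall (k : nat -> nat) (a b : nat -> R) (N : forall n, 'rV[R]_(k n) -> R)
          (A : forall n, set 'rV[R]_(k n)) (f : forall n, X -> 'rV[R]_(k n)),
     (forall n, a n < b n) ->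
     (forall n, is_norm (N n)) ->
     (forall n, closed_nowhere_dense_in (cube (k n) (a n) (b n)) (A n)) ->
     (forall n, continuous (f n) /\ forall x, cube (k n) (a n) (b n) (f n x)) ->
     forall eps : nat -> R, (forall n, 0 < eps n) ->
       exists (m : nat) (g : forall n, X -> 'rV[R]_(k n)),
         (forall n, (n < m)%N ->
            [/\ continuous (g n),
                forall x, cube (k n) (a n) (b n) (g n x)
              & forall x, N n (f n x - g n x) <= eps n]) /\
         (forall x, exists n, (n < m)%N /\ ~ A n (g n x))).
Proof.
move=> hC k a b N A f hab hN hA hf eps heps.
pose B n (c : 'rV[R]_(k n)) := [set v | N n (v - c) < eps n / 2].
have Bopen n c : open (B n c).
  have -> : B n c = (fun v => N n (v - c)) @^-1` [set t | t < eps n / 2] by [].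
  apply: open_comp; last exact: open_lt.
  move=> v _.
  have h1 : {for v, continuous (fun v : 'rV[R]_(k n) => v - c)}.
    apply: continuousB; last exact: cst_continuous.
    by move=> ? ?.
  have h2 : {for v - c, continuous (N n)} by apply: N_cont.
  exact: (continuous_comp h1 h2).
have Bself n c : B n c c by rewrite /B /= subrr (N0 (hN n)) divr_gt0.
have /dchoice [D hD] : forall n, exists D : seq 'rV[R]_(k n),
    forall v, cube (k n) (a n) (b n) v -> exists2 c, c \in D & B n c v.
  move=> n; have := @cube_compact R (k n) (a n) (b n).
  rewrite compact_cover => /(_ _ setT (B n)).
  case.
  - by move=> c _; exact: Bopen.
  - by move=> v hv; exists v => //; exact: Bself.
  move=> D' _ hcovD; exists (finmap.enum_fset D') => v /hcovD [c hc hBc]; by exists c.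
pose omega n := [seq f n @^-1` B n c | c <- D n].
have hcov n : fo_finite_cover R (omega n).
  split.
    move=> U /mapP [c _ ->].
    exists (fun x => Num.max 0 (eps n / 2 - N n (f n x - c))); split.
      apply: max0_cont => x.
      have h1 : {for x, continuous (fun x => f n x - c)}.
        apply: continuousB; [exact: (hf n).1 | exact: cst_continuous].
      have h2 : {for f n x - c, continuous (N n)} by apply: N_cont.
      apply: (@continuousB R R^o X (fun=> eps n / 2) (fun x => N n (f n x - c)) x).
        exact: cst_continuous.
      exact: (continuous_comp h1 h2).
    rewrite -coz_pos; apply/seteqP; split => x /=; by rewrite subr_gt0.
  move=> x; have [c cD hc] := hD n (f n x) ((hf n).2 x).
  exists (f n @^-1` B n c) => //; exact: map_f.
have [kk [gamma [hg hcovg]]] := hC omega hcov.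
have /choice [psi hpsi] : forall p : nat * nat, exists psi : X -> R,
    continuous psi /\ (forall x, 0 <= psi x) /\
    ((p.1 < kk)%N -> (p.2 < size (gamma p.1))%N ->
       nth set0 (gamma p.1) p.2 = [set x | psi x != 0]).
  move=> [n j] /=.
  case: (boolP ((n < kk) && (j < size (gamma n)))%N) => [/andP [hn hj] | hnj]; last first.
    exists (fun=> 0); split; first exact: cst_continuous.
    by split => // hn hj; rewrite hn hj in hnj.
  have [phi [phic phie]] := ((hg n hn).1).1 _ (mem_nth set0 hj).
  exists (fun x => `|phi x|); split.
    move=> x; apply: (@continuous_comp _ _ _ phi Num.norm x);
      [exact: phic | exact: norm_continuous].
  split => // _ _; rewrite phie; apply/seteqP; split => x /=; by rewrite normr_eq0.
have /dchoice [q hq] : forall p : nat * nat, exists q : 'rV[R]_(k p.1),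
    cube (k p.1) (a p.1) (b p.1) q /\
    ((p.1 < kk)%N -> (p.2 < size (gamma p.1))%N -> forall x,
       nth set0 (gamma p.1) p.2 x -> ~ A p.1 q /\ N p.1 (f p.1 x - q) <= eps p.1).
  move=> [n j] /=.
  have cq0 : cube (k n) (a n) (b n) (const_mx (a n)).
    by move=> i; rewrite mxE lexx ltW.
  case: (pselect ((n < kk)%N /\ (j < size (gamma n))%N /\ exists x, nth set0 (gamma n) j x));
    last first.
    move=> hno; exists (const_mx (a n)); split => // hn hj x hx; exfalso; apply: hno.
    by split => //; split => //; exists x.
  move=> [hn [hj [x0 hx0]]].
  have [V Vin sUV] := (hg n hn).2 _ (mem_nth set0 hj).
  move: Vin => /mapP [c _ eV].
  have hfx0 : B n c (f n x0) by have := sUV _ hx0; rewrite eV.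
  have [qq [[qB qQ] qA]] : exists qq, (B n c `&` cube (k n) (a n) (b n)) qq /\ ~ A n qq.
    apply: contrapT => hno; have [_ _ hnd] := hA n.
    have e : B n c `&` cube (k n) (a n) (b n) = set0.
      apply: hnd; first exact: Bopen.
      move=> v hv; apply: contrapT => hv'; apply: hno; by exists v.
    have : (B n c `&` cube (k n) (a n) (b n)) (f n x0) by split => //; exact: (hf n).2.
    by rewrite e.
  exists qq; split => // _ _ x hx; split => //.
  have : B n c (f n x) by have := sUV _ hx; rewrite eV.
  rewrite /B /= => hfx.
  have -> : f n x - qq = (f n x - c) + (c - qq) by rewrite addrA subrK.
  apply: le_trans (NT (hN n) _ _) _; rewrite (NB (hN n) c qq).
  have := ltrD hfx qB; rewrite -splitr => h; exact: ltW h.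
have psi_ge0 p x : 0 <= psi p x by have [_ [h _]] := hpsi p; exact: h.
have psi_cont p : continuous (psi p) by have [h _] := hpsi p.
pose S x := \sum_(n < kk) \sum_(j < size (gamma n)) psi (val n, val j) x.
pose T : R := \sum_(n < kk) (size (gamma n))%:R.
have T_ge0 : 0 <= T by apply: sumr_ge0 => n _; exact: ler0n.
have inner_ge0 (n : 'I_kk) x : 0 <= \sum_(j < size (gamma n)) psi (val n, val j) x.
  by apply: sumr_ge0 => j _; exact: psi_ge0.
have S_cont : continuous S.
  by apply: sum_cont => n; apply: sum_cont => j; exact: psi_cont.
have mem_nz n j x : (n < kk)%N -> (j < size (gamma n))%N ->
    nth set0 (gamma n) j x <-> psi (n, j) x != 0.
  move=> hn hj; have [_ [_ h]] := hpsi (n, j); rewrite (h hn hj) /=; by [].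
have S_pos x : 0 < S x.
  have [n [hn [U Uin Ux]]] := hcovg x.
  have hj : (index U (gamma n) < size (gamma n))%N by rewrite index_mem.
  have hne : psi (n, index U (gamma n)) x != 0.
    by apply/(mem_nz _ _ _ hn hj); rewrite nth_index.
  apply: (@lt_le_trans _ _ (psi (n, index U (gamma n)) x)).
    by rewrite lt_neqAle eq_sym hne psi_ge0.
  apply: le_trans (@le_sum_term R _ (fun n : 'I_kk => \sum_(j < size (gamma n)) psi (val n, val j) x) (Ordinal hn) (fun n => inner_ge0 n x)).
  exact: (@le_sum_term R _ (fun j : 'I_(size (gamma n)) => psi (n, val j) x) (Ordinal hj) (fun j => psi_ge0 _ x)).
pose lam n j x := Num.min 1 ((T + 1) * psi (n, j) x / S x).
have lam_cont n j : continuous (lam n j).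
  move=> x; apply: (@continuous_min R X (fun=> 1) (fun x => (T + 1) * psi (n, j) x / S x) x).
    exact: cst_continuous.
  apply: continuousM.
    apply: continuousM; [exact: cst_continuous | exact: psi_cont].
  apply: continuousV; [by rewrite gt_eqF | exact: S_cont].
have lam01 n j x : 0 <= lam n j x <= 1.
  rewrite /lam; apply/andP; split; last by rewrite ge_min lexx.
  rewrite le_min ler01 /=; apply: divr_ge0; [apply: mulr_ge0 => //; exact: addr_ge0 | exact: ltW].
have lam0 n j x : psi (n, j) x = 0 -> lam n j x = 0.
  by move=> h; rewrite /lam h mulr0 mul0r min_r // ler01.
have lam1 n j x : S x <= (T + 1) * psi (n, j) x -> lam n j x = 1.
  move=> h; rewrite /lam min_l //.
  by rewrite ler_pdivlMr // mul1r.
pose qn n j : 'rV[R]_(k n) := q (n, j).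
pose g n x : 'rV[R]_(k n) :=
  f n x + \sum_(j < size (gamma n)) lam n j x *: (qn n (val j) - f n x).
have gform n x : (n < kk)%N ->
   (exists j : 'I_(size (gamma n)),
      nth set0 (gamma n) j x /\ g n x = f n x + lam n j x *: (qn n (val j) - f n x))
   \/ ((forall j : 'I_(size (gamma n)), ~ nth set0 (gamma n) j x) /\ g n x = f n x).
  move=> hn.
  case: (pselect (exists j : 'I_(size (gamma n)), nth set0 (gamma n) j x)) => [[j hj]|hno].
    left; exists j; split => //; congr (_ + _).
    rewrite (bigD1 j) //= big1 ?addr0 // => j' hj'.
    suff -> : lam n j' x = 0 by rewrite scale0r.
    apply: lam0; apply/eqP; rewrite -[_ == 0]negbK; apply/negP => /(mem_nz _ _ _ hn (ltn_ord j')) hx'.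
    have [[_ hdisj] _] := hg n hn.
    have hd := hdisj j j' (ltn_ord j) (ltn_ord j').
    have : (nth set0 (gamma n) j `&` nth set0 (gamma n) j') x by [].
    rewrite hd // => e; move/eqP: hj'; apply; apply: val_inj => /=; by rewrite e.
  right; split; first by move=> j hj; apply: hno; exists j.
  rewrite /g big1 ?addr0 // => j _.
  suff -> : lam n j x = 0 by rewrite scale0r.
  apply: lam0; apply/eqP; rewrite -[_ == 0]negbK; apply/negP => /(mem_nz _ _ _ hn (ltn_ord j)) hx'.
  apply: hno; by exists j.
exists kk, g; split.
  move=> n hn; split.
  - have hsc : continuous (fun x => \sum_(j < size (gamma n)) lam n j x *: (qn n (val j) - f n x)).
      apply: sum_cont => j x; apply: continuousZ; first exact: lam_cont.
      apply: continuousB; [exact: cst_continuous | exact: (hf n).1].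
    move=> x; exact: (@continuousD R _ X (f n) _ x ((hf n).1 x) (hsc x)).
  - move=> x; case: (gform n x hn) => [[j [hj ->]]|[_ ->]]; last exact: (hf n).2.
    apply: cube_conv; [exact: (hf n).2 | exact: (hq (n, val j)).1 | exact: lam01].
  - move=> x; case: (gform n x hn) => [[j [hj ->]]|[_ ->]]; last first.
      by rewrite subrr (N0 (hN n)) ltW.
    rewrite opprD addrA subrr add0r (NN (hN n)) (NZ (hN n)) ger0_norm; last by have /andP[] := lam01 n j x.
    have [_ hqq] := hq (n, val j); have [_ hle] := hqq hn (ltn_ord j) x hj.
    rewrite (NB (hN n) (qn n (val j)) (f n x)); apply: (le_trans _ hle).
    apply: ler_piMl; first exact: Nge0 (hN n) _.
    by have /andP[] := lam01 n j x.
move=> x.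
have [n [j hle]] : exists (n : 'I_kk) (j : 'I_(size (gamma n))), S x <= (T + 1) * psi (val n, val j) x.
  apply: contrapT => hno.
  have hlt : forall (n : 'I_kk) (j : 'I_(size (gamma n))), (T + 1) * psi (val n, val j) x <= S x.
    move=> n j; rewrite leNgt; apply/negP => h; apply: hno; exists n, j; exact: ltW.
  have h1 : (T + 1) * S x = \sum_(n < kk) \sum_(j < size (gamma n)) (T + 1) * psi (val n, val j) x.
    by rewrite /S mulr_sumr; apply: eq_bigr => n _; rewrite mulr_sumr.
  have h2 : \sum_(n < kk) \sum_(j < size (gamma n)) (T + 1) * psi (val n, val j) x
      <= \sum_(n < kk) \sum_(j < size (gamma n)) S x.
    by apply: ler_sum => n _; apply: ler_sum => j _; exact: hlt.
  have h3 : \sum_(n < kk) \sum_(j < size (gamma n)) S x = S x * T.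
    rewrite /T mulr_sumr; apply: eq_bigr => n _; by rewrite sumr_const card_ord mulr_natr.
  apply: (@fin_ineq R (S x) T (S_pos x)); by rewrite h1 -h3.
exists (val n); split; first exact: ltn_ord.
have hpsi_ne : psi (val n, val j) x != 0.
  apply/negP => /eqP h0; move: hle; rewrite h0 mulr0 => h.
  by have := lt_le_trans (S_pos x) h; rewrite ltxx.
have hx : nth set0 (gamma n) j x by apply/(mem_nz _ _ _ (ltn_ord n) (ltn_ord j)).
have hl := lam1 _ _ _ hle.
case: (gform n x (ltn_ord n)) => [[j' [hj' e]]|e].
  have jj : j' = j.
    apply: contrapT => hne.
    have [[_ hdisj] _] := hg n (ltn_ord n).
    have hd := hdisj j' j (ltn_ord j') (ltn_ord j).
    have : (nth set0 (gamma n) j' `&` nth set0 (gamma n) j) x by [].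
    rewrite hd // => e'; apply: hne; apply: val_inj; exact: e'.
  subst j'; rewrite e hl scale1r addrC subrK.
  have [_ hqq] := hq (val n, val j); exact: (hqq (ltn_ord n) (ltn_ord j) x hx).1.
by case: e => /(_ j).
Qed.

End Helpers.
Import Helpers.

Theorem corollary5p2 (R : realType) (X : topologicalType) (hX : tychonoff_space R X) :
  finite_C_space R X <->
  (forall (k : nat -> nat) (a b : nat -> R) (N : forall n, 'rV[R]_(k n) -> R)
          (A : forall n, set 'rV[R]_(k n)) (f : forall n, X -> 'rV[R]_(k n)),
     (forall n, a n < b n) ->
     (forall n, is_norm (N n)) ->
     (forall n, closed_nowhere_dense_in (cube (k n) (a n) (b n)) (A n)) ->
     (forall n, continuous (f n) /\ forall x, cube (k n) (a n) (b n) (f n x)) ->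
     forall eps : nat -> R, (forall n, 0 < eps n) ->
       exists (m : nat) (g : forall n, X -> 'rV[R]_(k n)),
         (forall n, (n < m)%N ->
            [/\ continuous (g n),
                forall x, cube (k n) (a n) (b n) (g n x)
              & forall x, N n (f n x - g n x) <= eps n]) /\
         (forall x, exists n, (n < m)%N /\ ~ A n (g n x))).
Proof. split; [exact: dirA | exact: dirB]. Qed.
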